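(* Let $(\mathfrak g,[\cdot,\cdot]_{\mathfrak g},E)$ be an ENL algebra, $(W;T,\rho)$ an ENE-representation of it, and $K:W\to\mathfrak g$ an ENE-relative Rota–Baxter operator with respect to $(W;T,\rho)$. Let $\bar K\in(\mathfrak g\oplus W^* )\otimes(\mathfrak g\oplus W^* )$ be the element corresponding to $K$ under $\mathrm{Hom}(W,\mathfrak g)\cong\mathfrak g\otimes W^*$, and $r_K:=\bar K-\sigma(\bar K)$ where $\sigma$ is the flip. Then $r_K$ is a skew-symmetric solution of the classical Yang–Baxter equation in the semidirect product ENL algebra $(\mathfrak g\ltimes_{\rho^*}W^*,E+T^* )$; that is, $[\![r_K,r_K]\!]=0$ in $\mathfrak g\ltimes_{\rho^*}W^*$ and $((E+T^* )\otimes\mathrm{Id}-\mathrm{Id}\otimes(E+T^* ))(r_K)=0$.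
   Context: All vector spaces are finite-dimensional over an algebraically closed field of characteristic zero. An ENL algebra is a Lie algebra with linear $E$ such that $E[x,y]=[x,Ey]$ for all $x,y$. An ENE-representation $(W;T,\rho)$ of $(\mathfrak g,E)$ is a representation $\rho:\mathfrak g\to\mathfrak{gl}(W)$ with linear $T:W\to W$ such that $T(\rho(x)u)=\rho(Ex)u=\rho(x)(Tu)$. An ENE-relative Rota–Baxter operator is a linear $K:W\to\mathfrak g$ with $[Ku,Kv]_{\mathfrak g}=K(\rho(Ku)v-\rho(Kv)u)$ for all $u,v\in W$ and $E\circ K=K\circ T$. The dual representation is $\langle\rho^*(x)\xi,u\rangle=-\langle\xi,\rho(x)u\rangle$, $T^*$ is the dual map of $T$. The semidirect product $\mathfrak g\ltimes_{\rho^*}W^*$ is $\mathfrak g\oplus W^*$ with bracket $[x+\xi,y+\eta]=[x,y]_{\mathfrak g}+\rho^*(x)\eta-\rho^*(y)\xi$, with operator $(E+T^* )(x+\xi)=Ex+T^*\xi$. Concretely $\bar K=\sum_iK(w_i)\otimes w_i^*$ for a basis $(w_i)$ of $W$ with dual basis $(w_i^* )$. For $r=\sum a_i\otimes b_i$, $[\![r,r]\!]=[r_{12},r_{13}]+[r_{13},r_{23}]+[r_{12},r_{23}]$ in the tensor cube of the universal enveloping algebra. *)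

(* Defs.v *)
(* Finite-dimensional spaces are modelled by row vectors
   'rV[F]_n over a field F (any n-dim space is isomorphic to F^n);
   tensors in L (x) L, L = F^N, are N x N matrices (a (x) b |-> a^T *m b),
   tensors in L (x) L (x) L are coefficient functions 'I_N -> 'I_N -> 'I_N -> F. *)
From mathcomp Require Import all_boot all_order all_algebra.
Set Implicit Arguments. Unset Strict Implicit. Unset Printing Implicit Defensive.
Import GRing.Theory.
Local Open Scope ring_scope.

Definition bv {F : fieldType} {n : nat} (i : 'I_n) : 'rV[F]_n := delta_mx 0 i.

Definition is_linear {F : fieldType} {n m : nat} (f : 'rV[F]_n -> 'rV[F]_m) : Prop :=
  forall (a : F) u v, f (a *: u + v) = a *: f u + f v.

Definition is_Lie {F : fieldType} {n : nat} (br : 'rV[F]_n -> 'rV[F]_n -> 'rV[F]_n) : Prop :=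
  [/\ forall x, is_linear (br x), forall y, is_linear (br^~ y),
      forall x, br x x = 0 &
      forall x y z, br x (br y z) + br y (br z x) + br z (br x y) = 0].

Definition is_ENL {F : fieldType} {n : nat} (br : 'rV[F]_n -> 'rV[F]_n -> 'rV[F]_n)
  (E : 'rV[F]_n -> 'rV[F]_n) : Prop :=
  [/\ is_Lie br, is_linear E & forall x y, E (br x y) = br x (E y)].

Definition is_rep {F : fieldType} {n m : nat} (br : 'rV[F]_n -> 'rV[F]_n -> 'rV[F]_n)
  (rho : 'rV[F]_n -> 'rV[F]_m -> 'rV[F]_m) : Prop :=
  [/\ forall x, is_linear (rho x), forall u, is_linear (fun x => rho x u) &
      forall x y u, rho (br x y) u = rho x (rho y u) - rho y (rho x u)].

Definition is_ENE_rep {F : fieldType} {n m : nat} (br : 'rV[F]_n -> 'rV[F]_n -> 'rV[F]_n)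
  (E : 'rV[F]_n -> 'rV[F]_n) (T : 'rV[F]_m -> 'rV[F]_m)
  (rho : 'rV[F]_n -> 'rV[F]_m -> 'rV[F]_m) : Prop :=
  [/\ is_rep br rho, is_linear T &
      forall x u, T (rho x u) = rho (E x) u /\ rho (E x) u = rho x (T u)].

Definition is_ENE_RB {F : fieldType} {n m : nat} (br : 'rV[F]_n -> 'rV[F]_n -> 'rV[F]_n)
  (E : 'rV[F]_n -> 'rV[F]_n) (T : 'rV[F]_m -> 'rV[F]_m)
  (rho : 'rV[F]_n -> 'rV[F]_m -> 'rV[F]_m) (K : 'rV[F]_m -> 'rV[F]_n) : Prop :=
  [/\ is_linear K,
      forall u v, br (K u) (K v) = K (rho (K u) v - rho (K v) u) &
      forall u, E (K u) = K (T u)].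

(* W^dual is identified with F^m via the dual basis; pairing <xi, u> *)
Definition dpair {F : fieldType} {m : nat} (xi u : 'rV[F]_m) : F :=
  \sum_(i < m) xi 0 i * u 0 i.

Definition dual_rep {F : fieldType} {n m : nat} (rho : 'rV[F]_n -> 'rV[F]_m -> 'rV[F]_m)
  (x : 'rV[F]_n) (xi : 'rV[F]_m) : 'rV[F]_m :=
  \row_i (- dpair xi (rho x (bv i))).

Definition dual_map {F : fieldType} {m : nat} (T : 'rV[F]_m -> 'rV[F]_m)
  (xi : 'rV[F]_m) : 'rV[F]_m :=
  \row_i dpair xi (T (bv i)).

Definition sd_bracket {F : fieldType} {n m : nat} (br : 'rV[F]_n -> 'rV[F]_n -> 'rV[F]_n)
  (rho : 'rV[F]_n -> 'rV[F]_m -> 'rV[F]_m) (X Y : 'rV[F]_(n + m)) : 'rV[F]_(n + m) :=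
  row_mx (br (lsubmx X) (lsubmx Y))
         (dual_rep rho (lsubmx X) (rsubmx Y) - dual_rep rho (lsubmx Y) (rsubmx X)).

Definition sd_op {F : fieldType} {n m : nat} (E : 'rV[F]_n -> 'rV[F]_n)
  (T : 'rV[F]_m -> 'rV[F]_m) (X : 'rV[F]_(n + m)) : 'rV[F]_(n + m) :=
  row_mx (E (lsubmx X)) (dual_map T (rsubmx X)).

Definition tens {F : fieldType} {N : nat} (a b : 'rV[F]_N) : 'M[F]_N := a^T *m b.

Definition Kbar {F : fieldType} {n m : nat} (K : 'rV[F]_m -> 'rV[F]_n) : 'M[F]_(n + m) :=
  \sum_(i < m) tens (row_mx (K (bv i)) 0) (row_mx 0 (bv i)).

Definition flip {F : fieldType} {N : nat} (r : 'M[F]_N) : 'M[F]_N := r^T.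

Definition rK {F : fieldType} {n m : nat} (K : 'rV[F]_m -> 'rV[F]_n) : 'M[F]_(n + m) :=
  Kbar K - flip (Kbar K).

Definition tmap2 {F : fieldType} {N : nat} (f g : 'rV[F]_N -> 'rV[F]_N) (r : 'M[F]_N)
  : 'M[F]_N :=
  \sum_(p < N) \sum_(q < N) r p q *: tens (f (bv p)) (g (bv q)).

(* [[r, r]] = [r12,r13] + [r13,r23] + [r12,r23], as coefficients in L (x) L (x) L
   w.r.t. the standard basis: for r = sum r_pq e_p (x) e_q,
   [r12,r13] = sum r_iq r_ks [e_i,e_k] (x) e_q (x) e_s, etc. *)
Definition CYB {F : fieldType} {N : nat} (brL : 'rV[F]_N -> 'rV[F]_N -> 'rV[F]_N)
  (r : 'M[F]_N) (p q s : 'I_N) : F :=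
    \sum_(i < N) \sum_(k < N) r i q * r k s * brL (bv i) (bv k) 0 p
  + \sum_(j < N) \sum_(l < N) r p j * r q l * brL (bv j) (bv l) 0 s
  + \sum_(j < N) \sum_(k < N) r p j * r k s * brL (bv j) (bv k) 0 q.

(* Main.v *)
Require Import Defs.
From mathcomp Require Import all_boot all_order all_algebra.
From mathcomp Require Import ring.
Set Implicit Arguments. Unset Strict Implicit. Unset Printing Implicit Defensive.
Import GRing.Theory.
Local Open Scope ring_scope.

Section Aux.
Variable F : fieldType.

Section Lin.
Variables (n m : nat) (f : 'rV[F]_n -> 'rV[F]_m).
Hypothesis lf : is_linear f.
Lemma lin0 : f 0 = 0.
Proof. by have := lf (-1) 0 0; rewrite scaler0 addr0 scaleN1r addNr. Qed.
Lemma linN u : f (- u) = - f u.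
Proof. by have := lf (-1) u 0; rewrite addr0 !scaleN1r lin0 addr0. Qed.
Lemma linD u v : f (u + v) = f u + f v.
Proof. by have := lf 1 u v; rewrite !scale1r. Qed.
Lemma linZ a u : f (a *: u) = a *: f u.
Proof. by have := lf a u 0; rewrite !addr0 lin0 addr0. Qed.
Lemma linB u v : f (u - v) = f u - f v.
Proof. by rewrite linD linN. Qed.
Lemma linsum N (c : 'I_N -> F) (v : 'I_N -> 'rV[F]_n) :
  f (\sum_(i < N) c i *: v i) = \sum_(i < N) c i *: f (v i).
Proof.
elim/big_rec2: _ => [|i y1 y2 _ <-]; first exact: lin0.
by rewrite lf.
Qed.
Lemma linexp u : f u = \sum_(j < n) u 0 j *: f (bv j).
Proof. by rewrite {1}(row_sum_delta u) linsum. Qed.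
Lemma linE u a : f u 0 a = \sum_(j < n) u 0 j * f (bv j) 0 a.
Proof. by rewrite linexp summxE; apply: eq_bigr => j _; rewrite mxE. Qed.
End Lin.

Lemma sum_delta N (c : 'I_N -> F) i : \sum_(j < N) c j * (bv j : 'rV[F]_N) 0 i = c i.
Proof.
rewrite (bigD1 i) //= big1 ?addr0; first by rewrite mxE !eqxx mulr1.
by move=> j /negbTE hj; rewrite mxE eq_sym hj andbF mulr0.
Qed.
Lemma sum_delta2 N (c : 'I_N -> F) i : \sum_(j < N) (bv i : 'rV[F]_N) 0 j * c j = c i.
Proof.
rewrite (bigD1 i) //= big1 ?addr0; first by rewrite mxE !eqxx mul1r.
by move=> j /negbTE hj; rewrite mxE hj andbF mul0r.
Qed.

Lemma sumbv N (c : 'I_N -> F) : \sum_(j < N) c j *: (bv j : 'rV[F]_N) = \row_j c j.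
Proof. by rewrite [RHS]row_sum_delta; apply: eq_bigr => j _; rewrite mxE. Qed.

Lemma bilin N (B : 'rV[F]_N -> 'rV[F]_N -> 'rV[F]_N) (c d : 'I_N -> F) p :
  (forall x, is_linear (B x)) -> (forall y, is_linear (B^~ y)) ->
  \sum_(i < N) \sum_(k < N) c i * d k * B (bv i) (bv k) 0 p
  = B (\sum_(i < N) c i *: bv i) (\sum_(k < N) d k *: bv k) 0 p.
Proof.
move=> hl hr.
have -> := linsum (hr (\sum_(k < N) d k *: bv k)) c (@bv F N).
rewrite summxE; apply: eq_bigr => i _; rewrite mxE.
have -> := linsum (hl (bv i)) d (@bv F N).
rewrite summxE big_distrr; apply: eq_bigr => k _; rewrite mxE /=.
by rewrite mulrA [c i * _]mulrC.
Qed.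

Lemma tensE N (a b : 'rV[F]_N) x y : tens a b x y = a 0 x * b 0 y.
Proof. by rewrite /tens !mxE big_ord1 !mxE. Qed.


Lemma dpair_l m (a : F) (u v w : 'rV[F]_m) : dpair (a *: u + v) w = a * dpair u w + dpair v w.
Proof. rewrite /dpair big_distrr -big_split; apply: eq_bigr => i _; by rewrite !mxE /= mulrDl mulrA. Qed.
Lemma dpair_r m (a : F) (u v w : 'rV[F]_m) : dpair w (a *: u + v) = a * dpair w u + dpair w v.
Proof. rewrite /dpair big_distrr -big_split; apply: eq_bigr => i _; by rewrite !mxE /= mulrDr mulrCA. Qed.
Lemma dpair0 m (w : 'rV[F]_m) : dpair 0 w = 0.
Proof. by rewrite /dpair big1 // => i _; rewrite mxE mul0r. Qed.

Section Main.
Variables (n m : nat) (br : 'rV[F]_n -> 'rV[F]_n -> 'rV[F]_n) (E : 'rV[F]_n -> 'rV[F]_n)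
  (T : 'rV[F]_m -> 'rV[F]_m) (rho : 'rV[F]_n -> 'rV[F]_m -> 'rV[F]_m)
  (K : 'rV[F]_m -> 'rV[F]_n).
Hypotheses (brl : forall x, is_linear (br x)) (brr : forall y, is_linear (br^~ y)).
Hypotheses (rhol : forall x, is_linear (rho x)) (rhor : forall u, is_linear (fun x => rho x u)).
Hypotheses (hE : is_linear E) (hK : is_linear K).

Lemma dr_lin2 x : is_linear (dual_rep rho x).
Proof. move=> a u v; apply/rowP => i; rewrite !mxE dpair_l; ring. Qed.
Lemma dr_lin1 xi : is_linear (fun x => dual_rep rho x xi).
Proof. move=> a u v; apply/rowP => i; rewrite !mxE (rhor (bv i)) dpair_r; ring. Qed.

Lemma dr0r x : dual_rep rho x 0 = 0.
Proof. by have := lin0 (dr_lin2 x). Qed.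
Lemma dr0l xi : dual_rep rho 0 xi = 0.
Proof. by have := lin0 (dr_lin1 xi). Qed.
Lemma drNr x xi : dual_rep rho x (- xi) = - dual_rep rho x xi.
Proof. by have := linN (dr_lin2 x) xi. Qed.
Lemma drNl x xi : dual_rep rho (- x) xi = - dual_rep rho x xi.
Proof. by have := linN (dr_lin1 xi) x. Qed.
Lemma br0r x : br x 0 = 0. Proof. by have := lin0 (brl x). Qed.
Lemma br0l y : br 0 y = 0. Proof. by have := lin0 (brr y). Qed.
Lemma brNr x y : br x (- y) = - br x y. Proof. by have := linN (brl x) y. Qed.
Lemma brNl x y : br (- x) y = - br x y. Proof. by have := linN (brr y) x. Qed.

Lemma lsub_lin (a : F) (u v : 'rV[F]_(n + m)) : lsubmx (a *: u + v) = a *: lsubmx u + lsubmx v.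
Proof. by apply/rowP => j; rewrite !mxE. Qed.
Lemma rsub_lin (a : F) (u v : 'rV[F]_(n + m)) : rsubmx (a *: u + v) = a *: rsubmx u + rsubmx v.
Proof. by apply/rowP => j; rewrite !mxE. Qed.

Lemma sdb_l X : is_linear (sd_bracket br rho X).
Proof.
move=> a u v; rewrite /sd_bracket lsub_lin rsub_lin scale_row_mx add_row_mx.
rewrite brl (dr_lin2 _ a) (dr_lin1 _ a) scalerBr opprD addrACA //.
Qed.
Lemma sdb_r Y : is_linear (sd_bracket br rho ^~ Y).
Proof.
move=> a u v; rewrite /sd_bracket lsub_lin rsub_lin scale_row_mx add_row_mx.
rewrite brr (dr_lin2 _ a) (dr_lin1 _ a) scalerBr opprD addrACA //.
Qed.

Lemma sdb_row x xi y eta :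
  sd_bracket br rho (row_mx x xi) (row_mx y eta) = row_mx (br x y) (dual_rep rho x eta - dual_rep rho y xi).
Proof. by rewrite /sd_bracket !row_mxKl !row_mxKr. Qed.

Lemma KbarE p q : Kbar K p q = \sum_(i < m) (row_mx (K (bv i)) (0 : 'rV[F]_m)) 0 p * (row_mx (0 : 'rV[F]_n) (bv i)) 0 q.
Proof. by rewrite /Kbar summxE; apply: eq_bigr => i _; rewrite tensE. Qed.

Lemma Kbar_ll a b : Kbar K (lshift m a) (lshift m b) = 0.
Proof. by rewrite KbarE big1 // => i _; rewrite !row_mxEl mxE mulr0. Qed.
Lemma Kbar_lr a j : Kbar K (lshift m a) (rshift n j) = K (bv j) 0 a.
Proof. by rewrite KbarE; under eq_bigr => i _ do rewrite row_mxEl row_mxEr; rewrite sum_delta. Qed.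
Lemma Kbar_r i q : Kbar K (rshift n i) q = 0.
Proof. by rewrite KbarE big1 // => j _; rewrite row_mxEr mxE mul0r. Qed.

Lemma rK_ll a b : rK K (lshift m a) (lshift m b) = 0.
Proof. by rewrite /rK /flip !mxE !Kbar_ll subrr. Qed.
Lemma rK_lr a j : rK K (lshift m a) (rshift n j) = K (bv j) 0 a.
Proof. by rewrite /rK /flip !mxE Kbar_lr Kbar_r subr0. Qed.
Lemma rK_rl j a : rK K (rshift n j) (lshift m a) = - K (bv j) 0 a.
Proof. by rewrite /rK /flip !mxE Kbar_lr Kbar_r sub0r. Qed.
Lemma rK_rr i j : rK K (rshift n i) (rshift n j) = 0.
Proof. by rewrite /rK /flip !mxE !Kbar_r subrr. Qed.

Definition kap a : 'rV[F]_m := \row_i K (bv i) 0 a.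

Lemma rowg a : \row_j rK K (lshift m a) j = row_mx 0 (kap a).
Proof.
apply/rowP => j; rewrite -(splitK j); case: (split j) => b /=.
  by rewrite mxE row_mxEl rK_ll mxE.
by rewrite mxE row_mxEr rK_lr mxE.
Qed.
Lemma roww i : \row_j rK K (rshift n i) j = row_mx (- K (bv i)) 0.
Proof.
apply/rowP => j; rewrite -(splitK j); case: (split j) => b /=.
  by rewrite mxE row_mxEl rK_rl mxE.
by rewrite mxE row_mxEr rK_rr mxE.
Qed.
Lemma colg a : \row_j rK K j (lshift m a) = row_mx 0 (- kap a).
Proof.
apply/rowP => j; rewrite -(splitK j); case: (split j) => b /=.
  by rewrite mxE row_mxEl rK_ll mxE.
by rewrite mxE row_mxEr rK_rl !mxE.
Qed.
Lemma colw i : \row_j rK K j (rshift n i) = row_mx (K (bv i)) 0.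
Proof.
apply/rowP => j; rewrite -(splitK j); case: (split j) => b /=.
  by rewrite mxE row_mxEl rK_lr.
by rewrite mxE row_mxEr rK_rr mxE.
Qed.

Lemma drK x a k : dual_rep rho x (kap a) 0 k = - K (rho x (bv k)) 0 a.
Proof.
rewrite mxE /dpair (linE hK); congr (- _); apply: eq_bigr => j _.
by rewrite mxE mulrC.
Qed.


Lemma entN (A : 'rV[F]_m) k : (- A) 0 k = - A 0 k. Proof. by rewrite mxE. Qed.
Lemma entB (A B : 'rV[F]_m) k : (A - B) 0 k = A 0 k - B 0 k. Proof. by rewrite !mxE. Qed.
Lemma ent0 k : (0 : 'rV[F]_m) 0 k = 0. Proof. by rewrite mxE. Qed.
Lemma entNn (A : 'rV[F]_n) k : (- A) 0 k = - A 0 k. Proof. by rewrite mxE. Qed.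
Lemma entBn (A B : 'rV[F]_n) k : (A - B) 0 k = A 0 k - B 0 k. Proof. by rewrite !mxE. Qed.
Lemma ent0n k : (0 : 'rV[F]_n) 0 k = 0. Proof. by rewrite mxE. Qed.

Hypothesis RB : forall u v, br (K u) (K v) = K (rho (K u) v - rho (K v) u).
Hypothesis EK : forall u, E (K u) = K (T u).

Lemma cyb0 p q s : CYB (sd_bracket br rho) (rK K) p q s = 0.
Proof.
rewrite /CYB !(bilin _ _ _ sdb_l sdb_r) !sumbv.
rewrite -(splitK p) -(splitK q) -(splitK s).
case: (split p) => a; case: (split q) => b; case: (split s) => c /=;
rewrite ?rowg ?roww ?colg ?colw !sdb_row ?row_mxEl ?row_mxEr ?br0l ?br0r ?brNl ?brNr
  ?dr0l ?dr0r ?drNl ?drNr ?subr0 ?sub0r ?opprK ?entN ?entB ?ent0 ?entNn ?entBn ?ent0n ?drK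
  ?RB ?(linB hK) ?entBn.
all: try ring.
Qed.


Lemma bv_l b : (bv (lshift m b) : 'rV[F]_(n + m)) = row_mx (bv b) 0.
Proof.
apply/rowP => j; rewrite -(splitK j); case: (split j) => c /=.
  by rewrite row_mxEl !mxE eq_lshift.
by rewrite row_mxEr !mxE eq_rlshift.
Qed.
Lemma bv_r i : (bv (rshift n i) : 'rV[F]_(n + m)) = row_mx 0 (bv i).
Proof.
apply/rowP => j; rewrite -(splitK j); case: (split j) => c /=.
  by rewrite row_mxEl !mxE eq_lrshift.
by rewrite row_mxEr !mxE eq_rshift.
Qed.
Lemma dm0 : dual_map T 0 = 0.
Proof. by apply/rowP => j; rewrite !mxE dpair0. Qed.
Lemma sdop_l b : sd_op E T (bv (lshift m b)) = row_mx (E (bv b)) 0.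
Proof. by rewrite /sd_op bv_l row_mxKl row_mxKr dm0. Qed.
Lemma sdop_r i : sd_op E T (bv (rshift n i)) = row_mx 0 (dual_map T (bv i)).
Proof. by rewrite /sd_op bv_r row_mxKl row_mxKr (lin0 hE). Qed.
Lemma dmE i j : dual_map T (bv i) 0 j = T (bv j) 0 i.
Proof. by rewrite mxE /dpair sum_delta2. Qed.

Lemma tmapE1 N (f : 'rV[F]_N -> 'rV[F]_N) r x y :
  tmap2 f id r x y = \sum_(p < N) r p y * f (bv p) 0 x.
Proof.
rewrite /tmap2 summxE; apply: eq_bigr => p _; rewrite summxE.
under eq_bigr => q _ do rewrite mxE tensE mulrCA mulrA.
by rewrite sum_delta mulrC.
Qed.
Lemma tmapE2 N (f : 'rV[F]_N -> 'rV[F]_N) r x y :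
  tmap2 id f r x y = \sum_(q < N) r x q * f (bv q) 0 y.
Proof.
rewrite /tmap2 summxE.
under eq_bigr => p _ do (rewrite summxE; under eq_bigr => q _ do rewrite mxE tensE mulrCA; rewrite -big_distrr /=).
under eq_bigr => p _ do rewrite mulrC; by rewrite sum_delta.
Qed.

Lemma tmap0 : tmap2 (sd_op E T) id (rK K) - tmap2 id (sd_op E T) (rK K) = 0.
Proof.
apply/matrixP => x y; rewrite !mxE tmapE1 tmapE2 !big_split_ord /=.
rewrite -(splitK x) -(splitK y).
case: (split x) => a; case: (split y) => b /=.
all: under [X in X + _ - _ = _]eq_bigr => i _ do rewrite ?rK_ll ?rK_lr ?rK_rl ?rK_rr ?sdop_l ?sdop_r ?row_mxEl ?row_mxEr ?ent0 ?ent0n ?mulr0 ?mul0r ?dmE.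
all: under [X in _ + X - _ = _]eq_bigr => i _ do rewrite ?rK_ll ?rK_lr ?rK_rl ?rK_rr ?sdop_l ?sdop_r ?row_mxEl ?row_mxEr ?ent0 ?ent0n ?mulr0 ?mul0r ?dmE.
all: under [X in _ - (X + _) = _]eq_bigr => i _ do rewrite ?rK_ll ?rK_lr ?rK_rl ?rK_rr ?sdop_l ?sdop_r ?row_mxEl ?row_mxEr ?ent0 ?ent0n ?mulr0 ?mul0r ?dmE.
all: under [X in _ - (_ + X) = _]eq_bigr => i _ do rewrite ?rK_ll ?rK_lr ?rK_rl ?rK_rr ?sdop_l ?sdop_r ?row_mxEl ?row_mxEr ?ent0 ?ent0n ?mulr0 ?mul0r ?dmE.
all: rewrite !big1_eq ?addr0 ?add0r ?subrr //.
all: rewrite ?oppr0 //.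
  under [X in _ - X = _]eq_bigr => i _ do rewrite mulrC.
  by rewrite -(linE hE) -(linE hK) EK subrr.
under [X in X - _ = _]eq_bigr => i _ do rewrite mulNr mulrC.
under [X in _ - X = _]eq_bigr => i _ do rewrite mulNr.
by rewrite !sumrN -(linE hE) -(linE hK) EK subrr.
Qed.

End Main.
End Aux.
Theorem theorem6p9 (F : closedFieldType) (n m : nat)
  (br : 'rV[F]_n -> 'rV[F]_n -> 'rV[F]_n) (E : 'rV[F]_n -> 'rV[F]_n)
  (T : 'rV[F]_m -> 'rV[F]_m) (rho : 'rV[F]_n -> 'rV[F]_m -> 'rV[F]_m)
  (K : 'rV[F]_m -> 'rV[F]_n) :
  [pchar F] =i pred0 ->
  is_ENL br E -> is_ENE_rep br E T rho -> is_ENE_RB br E T rho K ->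
  [/\ flip (rK K) = - rK K,
      (forall p q s : 'I_(n + m), CYB (sd_bracket br rho) (rK K) p q s = 0) &
      tmap2 (sd_op E T) id (rK K) - tmap2 id (sd_op E T) (rK K) = 0].
Proof.
move=> _ [[brl brr _ _] hE _] [[rhol rhor _] _ _] [hK RB EK].
split.
- by apply/matrixP => i j; rewrite !mxE opprB.
- by move=> p q s; eapply cyb0; eassumption.
- by eapply tmap0; eassumption.
Qed.
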